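(* Let $n$ be a power of $2$, $\theta\in\mathbb{R}^{n\times n}$ and $\epsilon>0$. There is a universal constant $C>0$ such that the partition produced by the $(\mathrm{TV},\epsilon)$ division scheme satisfies $$|P_{\theta,\epsilon}| \leq 1 + C\,\mathrm{TV}(\theta)\,\epsilon^{-1}\log n,$$ and for every $V>0$, $$\log|\mathcal{P}(V,n,\epsilon)| \leq C\, V\epsilon^{-1}\log n.$$
   Context: $\mathrm{TV}(\theta) = \sum_{(u,v)\in E}|\theta_u-\theta_v|$ (unnormalized), $E$ being the edges of the grid graph on the index set of the matrix (pairs of entries at $\ell_1$-distance 1). The $(\mathrm{TV},\epsilon)$ scheme: start with the whole matrix; if its $\mathrm{TV}\le\epsilon$, stop; otherwise split it dyadically into four equal-size submatrices (top-left, top-right, bottom-left, bottom-right, each with half the rows and half the columns). At each subsequent round, every current submatrix with $\mathrm{TV} > \epsilon$ is split dyadically into four in the same way; repeat until every part has $\mathrm{TV}\le\epsilon$. The resulting partition of $[n]\times[n]$ into rectangular blocks is $P_{\theta,\epsilon}$, with $|P_{\theta,\epsilon}|$ its number of blocks. $\mathcal{P}(V,n,\epsilon) = \{P_{\theta,\epsilon}: \theta\in\mathbb{R}^{n\times n},\ \mathrm{TV}(\theta)\le V\}$. *)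

(* Defs.v *)
From HB Require Import structures.
From mathcomp Require Import all_boot all_order all_algebra.
From mathcomp Require Import all_classical all_reals all_analysis.
Set Implicit Arguments. Unset Strict Implicit. Unset Printing Implicit Defensive.
Import Order.TTheory GRing.Theory Num.Theory.
Local Open Scope ring_scope.

(* Entry (i,j) of an m x n matrix, indices as naturals; 0 outside the range
   (never used outside the range below). *)
Definition mget (R : realType) (m n : nat) (A : 'M[R]_(m, n)) (i j : nat) : R :=
  match @insub _ (fun x => x < m)%N 'I_m i, @insub _ (fun x => x < n)%N 'I_n j with
  | Some i', Some j' => A i' j'
  | _, _ => 0
  end.

(* A dyadic square block: (row start, column start, s) = the submatrix
   [r, r + 2^s) x [c, c + 2^s). *)
Definition block := (nat * nat * nat)%type.

(* Unnormalized total variation of the submatrix on block b: the sum of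
   |theta_u - theta_v| over grid-graph edges (pairs of entries at l1-distance
   1) with both endpoints in the block. *)
Definition block_TV (R : realType) (m : nat) (theta : 'M[R]_m) (b : block) : R :=
  let: (r, c, s) := b in
  \sum_(r <= i < r + 2 ^ s)
   \sum_(c <= j < c + 2 ^ s)
     ((if (j.+1 < c + 2 ^ s)%N
       then `|mget theta i j.+1 - mget theta i j| else 0)
    + (if (i.+1 < r + 2 ^ s)%N
       then `|mget theta i.+1 j - mget theta i j| else 0)).

Definition TV (R : realType) (k : nat) (theta : 'M[R]_(2 ^ k)) : R :=
  block_TV theta (0%N, 0%N, k).

(* For s = 0 (a 1x1 block) the TV is
   0 <= eps (eps > 0), so stopping there is exactly the scheme. *)
Fixpoint tv_split (R : realType) (m : nat) (theta : 'M[R]_m) (eps : R)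
    (r c s : nat) : seq block :=
  match s with
  | 0 => [:: (r, c, 0%N)]
  | s'.+1 =>
      if block_TV theta (r, c, s) <= eps then [:: (r, c, s)]
      else let h := (2 ^ s')%N in
        tv_split theta eps r c s' ++ tv_split theta eps r (c + h) s'
        ++ tv_split theta eps (r + h) c s' ++ tv_split theta eps (r + h) (c + h) s'
  end.

(* The partition P_{theta,eps} of [n] x [n], n = 2^k, as the list of its
   blocks (in depth-first order; this list is determined by the set of blocks). *)
Definition tv_partition (R : realType) (k : nat) (theta : 'M[R]_(2 ^ k)) (eps : R)
  : seq block := tv_split theta eps 0 0 k.

Definition in_partition_class (R : realType) (k : nat) (V eps : R)
    (P : seq block) : Prop :=
  exists theta : 'M[R]_(2 ^ k), TV theta <= V /\ P = tv_partition theta eps.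

(* Main.v *)
Require Import Defs.
From HB Require Import structures.
From mathcomp Require Import all_boot all_order all_algebra.
From mathcomp Require Import all_classical all_reals all_analysis.
From mathcomp Require Import zify.
From mathcomp.algebra_tactics Require Import ring lra.
Import Order.TTheory GRing.Theory Num.Theory.
Set Implicit Arguments. Unset Strict Implicit.
Local Open Scope ring_scope.

Section S.
Variable (R : realType) (m : nat) (theta : 'M[R]_m) (eps : R).

Definition F (i j ec er : nat) : R :=
  (if (j.+1 < ec)%N then `|mget theta i j.+1 - mget theta i j| else 0)
  + (if (i.+1 < er)%N then `|mget theta i.+1 j - mget theta i j| else 0).

Lemma F_ge0 i j ec er : 0 <= F i j ec er.
Proof. by rewrite /F; apply: addr_ge0; case: ifP. Qed.

Lemma F_mono i j ec er ec' er' : (ec <= ec')%N -> (er <= er')%N ->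
  F i j ec er <= F i j ec' er'.
Proof.
move=> h1 h2; rewrite /F; apply: lerD.
  case: ifP => H; first by rewrite ifT //; lia.
  by case: ifP.
case: ifP => H; first by rewrite ifT //; lia.
by case: ifP.
Qed.

Definition S2 (r1 r2 c1 c2 ec er : nat) : R :=
  \sum_(r1 <= i < r2) \sum_(c1 <= j < c2) F i j ec er.

Lemma bTV r c s : block_TV theta (r, c, s) =
  S2 r (r + 2 ^ s) c (c + 2 ^ s) (c + 2 ^ s) (r + 2 ^ s).
Proof. by []. Qed.

Lemma S2_ge0 r1 r2 c1 c2 ec er : 0 <= S2 r1 r2 c1 c2 ec er.
Proof. by apply: sumr_ge0 => i _; apply: sumr_ge0 => j _; apply: F_ge0. Qed.

Lemma S2_mono r1 r2 c1 c2 ec er ec' er' : (ec <= ec')%N -> (er <= er')%N ->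
  S2 r1 r2 c1 c2 ec er <= S2 r1 r2 c1 c2 ec' er'.
Proof.
move=> h1 h2; apply: ler_sum => i _; apply: ler_sum => j _; exact: F_mono.
Qed.

Lemma bTV_ge0 b : 0 <= block_TV theta b.
Proof. case: b => [[r c] s]; rewrite bTV; exact: S2_ge0. Qed.

Lemma superadd r c s :
  block_TV theta (r, c, s) + block_TV theta (r, c + 2 ^ s, s)%N
  + block_TV theta (r + 2 ^ s, c, s)%N + block_TV theta (r + 2 ^ s, c + 2 ^ s, s)%N
  <= block_TV theta (r, c, s.+1).
Proof.
rewrite !bTV expnS; set h := (2 ^ s)%N.
have e1 : (r + 2 * h = (r + h) + h)%N by lia.
have e2 : (c + 2 * h = (c + h) + h)%N by lia.
rewrite e1 e2 /S2.
have hr1 : (r <= r + h)%N by lia.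
have hr2 : (r + h <= r + h + h)%N by lia.
have hc1 : (c <= c + h)%N by lia.
have hc2 : (c + h <= c + h + h)%N by lia.
rewrite [X in _ <= X](big_cat_nat hr1 hr2) /=.
rewrite [X in _ <= X + _](eq_bigr (fun i => \sum_(c <= j < c + h) F i j (c + h + h) (r + h + h)
   + \sum_(c + h <= j < c + h + h) F i j (c + h + h) (r + h + h))); last first.
  by move=> i _; rewrite (big_cat_nat hc1 hc2).
rewrite [X in _ <= X + _]big_split /=.
rewrite [X in _ <= _ + X](eq_bigr (fun i => \sum_(c <= j < c + h) F i j (c + h + h) (r + h + h)
   + \sum_(c + h <= j < c + h + h) F i j (c + h + h) (r + h + h))); last first.
  by move=> i _; rewrite (big_cat_nat hc1 hc2).
rewrite [X in _ <= _ + X]big_split /=.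
rewrite -!addrA; apply: lerD; last apply: lerD; last apply: lerD.
- apply: ler_sum => i _; apply: ler_sum => j _; apply: F_mono; lia.
- apply: ler_sum => i _; apply: ler_sum => j _; apply: F_mono; lia.
- apply: ler_sum => i _; apply: ler_sum => j _; apply: F_mono; lia.
- apply: ler_sum => i _; apply: ler_sum => j _; apply: F_mono; lia.
Qed.

Fixpoint nint (r c s : nat) : nat :=
  match s with
  | 0 => 0
  | s'.+1 =>
      if block_TV theta (r, c, s) <= eps then 0
      else let h := (2 ^ s')%N in
        (nint r c s' + nint r (c + h) s' + nint (r + h) c s' + nint (r + h) (c + h) s').+1
  end.

Fixpoint enc (r c s : nat) : seq bool :=
  match s with
  | 0 => [::]
  | s'.+1 =>
      if block_TV theta (r, c, s) <= eps then [:: false]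
      else let h := (2 ^ s')%N in
        true :: (enc r c s' ++ enc r (c + h) s' ++ enc (r + h) c s' ++ enc (r + h) (c + h) s')
  end.

Lemma size_split r c s : size (tv_split theta eps r c s) = (1 + 3 * nint r c s)%N.
Proof.
elim: s r c => [|s IH] r c //=.
case: ifP => // _; rewrite !size_cat !IH; lia.
Qed.

Lemma size_enc r c s : (size (enc r c s) <= 1 + 4 * nint r c s)%N.
Proof.
elim: s r c => [|s IH] r c //=.
case: ifP => // _; rewrite /= !size_cat.
have := IH r c; have := IH r (c + 2 ^ s)%N; have := IH (r + 2 ^ s)%N c;
have := IH (r + 2 ^ s)%N (c + 2 ^ s)%N; lia.
Qed.

Lemma nint0 r c s : nint r c s = 0%N -> tv_split theta eps r c s = [:: (r, c, s)].
Proof. by case: s => [|s] //=; case: ifP. Qed.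

Lemma nint_bound r c s : (nint r c s)%:R * eps <= s%:R * block_TV theta (r, c, s).
Proof.
elim: s r c => [|s IH] r c; first by rewrite /= !mul0r.
rewrite [nint r c s.+1]/=.
case: ifP => [_|]; first by rewrite mul0r; apply: mulr_ge0 => //; apply: bTV_ge0.
move/negbT; rewrite -ltNge => hgt.
have hs := superadd r c s.
rewrite -addn1 !natrD !mulrDl mul1r.
apply: (@le_trans _ _ (s%:R * block_TV theta (r, c, s.+1) + eps)); last first.
  rewrite -(addn1 s) natrD mulrDl mul1r; apply: lerD => //; rewrite addn1; exact: (ltW hgt).
apply: lerD => //.
apply: (le_trans (lerD (lerD (lerD (IH r c) (IH r (c + 2 ^ s)%N)) (IH (r + 2 ^ s)%N c)) (IH (r + 2 ^ s)%N (c + 2 ^ s)%N))).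
rewrite -!mulrDr; apply: ler_wpM2l => //.
Qed.
End S.

Fixpoint dec (r c s : nat) (bs : seq bool) : seq block * seq bool :=
  match s with
  | 0 => ([:: (r, c, 0%N)], bs)
  | s'.+1 =>
      match bs with
      | true :: bs' =>
          let h := (2 ^ s')%N in
          let: (p1, b1) := dec r c s' bs' in
          let: (p2, b2) := dec r (c + h) s' b1 in
          let: (p3, b3) := dec (r + h) c s' b2 in
          let: (p4, b4) := dec (r + h) (c + h) s' b3 in
          (p1 ++ p2 ++ p3 ++ p4, b4)
      | _ :: bs' => ([:: (r, c, s)], bs')
      | [::] => ([:: (r, c, s)], [::])
      end
  end.

Lemma dec_enc (R : realType) m (theta : 'M[R]_m) (eps : R) r c s rest :
  dec r c s (enc theta eps r c s ++ rest) = (tv_split theta eps r c s, rest).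
Proof.
elim: s r c rest => [|s IH] r c rest //=.
case: ifP => _ //=.
by rewrite -!catA !IH.
Qed.

Lemma ln2_ge (R : realType) : 1 / 2 <= ln (2 : R).
Proof.
have h := @le_ln1Dx R (- (1/2)).
have e : 1 + - (1 / 2) = (2 : R)^-1 by field.
rewrite e lnV ?posrE // in h.
have : (-1 : R) < - (1 / 2) by lra.
move/h => h'; lra.
Qed.

Lemma lnpow (R : realType) k : ln ((2 ^ k)%:R : R) = k%:R * ln 2.
Proof. by rewrite natrX lnXn // mulr_natl. Qed.

Theorem lemma4p2 :
  exists C : nat, (0 < C)%N /\
  forall (R : realType) (k : nat) (theta : 'M[R]_(2 ^ k)) (eps : R),
    0 < eps ->
    ((size (tv_partition theta eps))%:R
       <= 1 + C%:R * TV theta / eps * ln ((2 ^ k)%:R : R))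
    /\
    (forall V : R, 0 < V ->
       forall Ps : seq (seq block),
         uniq Ps ->
         (forall P, P \in Ps -> in_partition_class k V eps P) ->
         ln ((size Ps)%:R : R) <= C%:R * V / eps * ln ((2 ^ k)%:R : R)).
Proof.
exists 6%N; split => // R k theta eps heps.
have l2 := ln2_ge R.
rewrite lnpow; split.
  rewrite /tv_partition size_split.
  have hb := nint_bound theta eps 0 0 k.
  have hT : 0 <= TV theta by apply: bTV_ge0.
  set N := nint theta eps 0 0 k in hb *.
  set x := TV theta / eps.
  have hx : 0 <= x by apply: divr_ge0 => //; apply: ltW.
  have hN : N%:R <= k%:R * x.
    by rewrite /x mulrA ler_pdivlMr.
  have hk : 0 <= (k%:R : R) by [].
  have h1 := mulr_ge0 (mulr_ge0 hk hx) (_ : 0 <= ln (2:R) - 1/2).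
  have -> : 6%:R * TV theta / eps = 6%:R * x by rewrite /x mulrA.
  rewrite natrD natrM; nra.
move=> V hV Ps uPs hPs.
have hy : 0 <= (k%:R * V / eps : R).
  by apply: divr_ge0; [apply: mulr_ge0 => //; apply: ltW|apply: ltW].
set M := Num.truncn (k%:R * V / eps : R).
have hM : (M%:R <= k%:R * V / eps :> R) by rewrite truncn_le.
have hNM : forall P, P \in Ps -> exists theta : 'M[R]_(2 ^ k),
    P = tv_split theta eps 0 0 k /\ (nint theta eps 0 0 k <= M)%N.
  move=> P /hPs [th [hTV ->]]; exists th; split => //.
  rewrite /M truncn_ge_nat // ler_pdivlMr //.
  apply: (le_trans (nint_bound th eps 0 0 k)).
  by apply: ler_wpM2l => //.
have hsz : (size Ps <= 2 ^ (5 * M))%N.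
  case: (posnP M) => [M0|Mpos].
    rewrite M0 muln0 expn0.
    have -> : (1 = size [:: [:: ((0, 0), k)]])%N by [].
    apply: uniq_leq_size => // P /hNM [th [-> hn]].
    by rewrite nint0 ?inE //; move: hn; rewrite M0 leqn0 => /eqP.
  apply: (@leq_trans (2 ^ (1 + 4 * M))); last by rewrite leq_exp2l //; lia.
  pose L := (1 + 4 * M)%N.
  pose f := fun t : L.-tuple bool => (dec 0 0 k t).1.
  have -> : (2 ^ L = size (map f (enum {: L.-tuple bool})))%N.
    by rewrite size_map -cardE card_tuple card_bool.
  apply: uniq_leq_size => // P /hNM [th [-> hn]].
  set e := enc th eps 0 0 k.
  have he : (size e <= L)%N by have := size_enc th eps 0 0 k; rewrite -/e /L; lia.
  have hs : size (e ++ nseq (L - size e) false) == L.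
    by rewrite size_cat size_nseq; apply/eqP; lia.
  have -> : tv_split th eps 0 0 k = f (Tuple hs) by rewrite /f /= dec_enc.
  by apply: map_f; rewrite mem_enum.
have hln : ln ((size Ps)%:R : R) <= (5 * M)%:R * ln 2.
  case: (posnP (size Ps)) => [->|hp].
    rewrite ln0 //; apply: mulr_ge0 => //; lra.
  by rewrite -lnpow ler_ln ?posrE ?ltr0n ?expn_gt0 // ler_nat.
apply: (le_trans hln).
have -> : 6%:R * V / eps * (k%:R * ln 2) = 6%:R * (k%:R * V / eps) * ln (2 : R).
  by ring.
rewrite natrM; nra.
Qed.
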